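(* Let $\chi$ be a kernel as described in the context with $m_1(\chi,u)=0$ for all $u\in\mathbb{R}^+$. Let $f\in C^{(2)}(\mathbb{R}^+)$ and suppose $$\|I_w^{\chi}f-f\|_\infty=o(w^{-1})\quad\text{as } w\to+\infty.$$ Then $f$ is constant on $\mathbb{R}^+$.
   Context: A kernel is a continuous function $\chi:\mathbb{R}^+\to\mathbb{R}$ satisfying: (i) $\sum_{k=-\infty}^{+\infty}\chi(e^{-k}u)=1$ for every $u\in\mathbb{R}^+$; (ii) $M_2(\chi)<+\infty$ and $\lim_{\gamma\to+\infty}\sum_{|k-\log u|>\gamma}|\chi(e^{-k}u)|\,|k-\log u|^2=0$ uniformly with respect to $u\in\mathbb{R}^+$. Algebraic moments: $m_\nu(\chi,u)=\sum_{k\in\mathbb{Z}}\chi(e^{-k}u)(k-\log u)^\nu$; absolute moments: $M_\nu(\chi,u)=\sum_{k\in\mathbb{Z}}|\chi(e^{-k}u)|\,|k-\log u|^\nu$, $M_\nu(\chi)=\sup_{u>0}M_\nu(\chi,u)$. For $w>0$, $x\in\mathbb{R}^+$: $(I_w^{\chi}f)(x)=\sum_{k\in\mathbb{Z}}\chi(e^{-k}x^w)\,w\int_{k/w}^{(k+1)/w}f(e^u)\,du$; $\|\cdot\|_\infty$ is the sup norm on $\mathbb{R}^+$. Mellin differential operator: $(\theta f)(x)=xf'(x)$, $\theta^r=\theta(\theta^{r-1})$. $C(\mathbb{R}^+)$ denotes the bounded continuous functions on $\mathbb{R}^+$, and $C^{(2)}(\mathbb{R}^+)$ the $f\in C(\mathbb{R}^+)$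 such that $\theta f$ and $\theta^2 f$ exist and belong to $C(\mathbb{R}^+)$. *)

(* Defs.v *)
From Stdlib Require Import Reals Lra Lia ZArith Classical ClassicalEpsilon.
Open Scope R_scope.

Definition zsum (a : Z -> R) (l : R) : Prop :=
  exists l1 l2,
    infinite_sum (fun n : nat => a (Z.of_nat n)) l1 /\
    infinite_sum (fun n : nat => a (- Z.of_nat (S n))%Z) l2 /\
    l = l1 + l2.

(* Total value of a bilateral series (0 if it diverges; only used where it converges). *)
Definition zseries (a : Z -> R) : R :=
  match excluded_middle_informative (exists l, zsum a l) with
  | left H => proj1_sig (constructive_indefinite_description _ H)
  | right _ => 0
  end.

(* Total Riemann integral (0 if not Riemann integrable; the value of
   RiemannInt does not depend on the integrability proof). *)
Definition RInt (g : R -> R) (a b : R) : R :=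
  match excluded_middle_informative (inhabited (Riemann_integrable g a b)) with
  | left H => RiemannInt (epsilon H (fun _ => True))
  | right _ => 0
  end.

Definition abs_moment_term (chi : R -> R) (nu : nat) (u : R) (k : Z) : R :=
  Rabs (chi (exp (- IZR k) * u)) * (Rabs (IZR k - ln u)) ^ nu.

Definition alg_moment_term (chi : R -> R) (nu : nat) (u : R) (k : Z) : R :=
  chi (exp (- IZR k) * u) * (IZR k - ln u) ^ nu.

Definition M2_finite (chi : R -> R) : Prop :=
  exists B, forall u, 0 < u ->
    exists s, zsum (abs_moment_term chi 2 u) s /\ s <= B.

Definition tail_condition (chi : R -> R) : Prop :=
  forall eps, 0 < eps -> exists G, forall gamma, G <= gamma -> forall u, 0 < u ->
    forall s,
      zsum (fun k => if Rlt_dec gamma (Rabs (IZR k - ln u))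
                     then abs_moment_term chi 2 u k else 0) s ->
      Rabs s < eps.

(* A kernel in the sense of the paper (chi : R^+ -> R, values off R^+ irrelevant). *)
Definition kernel (chi : R -> R) : Prop :=
  (forall u, 0 < u -> continuity_pt chi u) /\
  (forall u, 0 < u -> zsum (fun k => chi (exp (- IZR k) * u)) 1) /\
  M2_finite chi /\
  tail_condition chi.

Definition I_op (chi : R -> R) (w : R) (f : R -> R) (x : R) : R :=
  zseries (fun k => chi (exp (- IZR k) * Rpower x w) *
                    (w * RInt (fun u => f (exp u)) (IZR k / w) ((IZR k + 1) / w))).

Definition bc_pos (g : R -> R) : Prop :=
  (forall x, 0 < x -> continuity_pt g x) /\
  (exists B, forall x, 0 < x -> Rabs (g x) <= B).

(* f in C^(2)(R^+): f, theta f = x f'(x), theta^2 f = x (theta f)'(x)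
   exist (on R^+) and are bounded continuous on R^+. *)
Definition C2_mellin (f : R -> R) : Prop :=
  exists df ddf : R -> R,
    (forall x, 0 < x -> derivable_pt_lim f x (df x)) /\
    (forall x, 0 < x -> derivable_pt_lim (fun y => y * df y) x (ddf x)) /\
    bc_pos f /\
    bc_pos (fun x => x * df x) /\
    bc_pos (fun x => x * ddf x).

(* Main.v *)
From Coquelicot Require Import Coquelicot.
Require Import Defs.
From Stdlib Require Import Reals ZArith Lra Lia FunctionalExtensionality Classical ClassicalEpsilon.
Open Scope R_scope.

Lemma zsum_unique a l m : zsum a l -> zsum a m -> l = m.
Proof.
  intros (l1 & l2 & H1 & H2 & ->) (m1 & m2 & G1 & G2 & ->).
  rewrite (uniqueness_sum _ _ _ H1 G1), (uniqueness_sum _ _ _ H2 G2); reflexivity.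
Qed.

Lemma zseries_eq a l : zsum a l -> zseries a = l.
Proof.
  intros H. unfold zseries.
  destruct (excluded_middle_informative _) as [e|n].
  - destruct (constructive_indefinite_description _ e) as [m Hm]; simpl.
    exact (zsum_unique _ _ _ Hm H).
  - exfalso; apply n; eauto.
Qed.

Lemma zsum_plus a b l m : zsum a l -> zsum b m -> zsum (fun k => a k + b k) (l + m).
Proof.
  intros (l1 & l2 & H1 & H2 & ->) (m1 & m2 & G1 & G2 & ->).
  exists (l1 + m1), (l2 + m2). repeat split.
  - apply is_series_Reals. apply is_series_Reals in H1. apply is_series_Reals in G1.
    exact (is_series_plus _ _ _ _ H1 G1).
  - apply is_series_Reals. apply is_series_Reals in H2. apply is_series_Reals in G2.
    exact (is_series_plus _ _ _ _ H2 G2).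
  - ring.
Qed.

Lemma zsum_scal c a l : zsum a l -> zsum (fun k => c * a k) (c * l).
Proof.
  intros (l1 & l2 & H1 & H2 & ->).
  exists (c * l1), (c * l2). repeat split.
  - apply is_series_Reals. apply is_series_Reals in H1.
    exact (is_series_scal c _ _ H1).
  - apply is_series_Reals. apply is_series_Reals in H2.
    exact (is_series_scal c _ _ H2).
  - ring.
Qed.

Lemma zsum_ext a b l : (forall k, a k = b k) -> zsum a l -> zsum b l.
Proof.
  intros H. replace b with a; auto. apply functional_extensionality; auto.
Qed.

Lemma series_comp (d c : nat -> R) S : (forall n, Rabs (d n) <= c n) ->
  infinite_sum c S -> exists S', infinite_sum d S' /\ Rabs S' <= S.
Proof.
  intros Hb Hc. apply is_series_Reals in Hc.
  assert (Ec : ex_series c) by (exists S; auto).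
  assert (Ed : ex_series d) by (apply (@ex_series_le R_AbsRing R_CompleteNormedModule d c); auto).
  assert (Ea : ex_series (fun n => Rabs (d n))).
  { apply (@ex_series_le R_AbsRing R_CompleteNormedModule _ c); auto. intro n. unfold norm; simpl.
    unfold abs; simpl. rewrite Rabs_Rabsolu; auto. }
  exists (Series d). split.
  - apply is_series_Reals. apply Series_correct; auto.
  - eapply Rle_trans. apply Series_Rabs; auto.
    rewrite <- (is_series_unique _ _ Hc). apply Series_le; auto.
    intro n; split; [apply Rabs_pos|auto].
Qed.

Lemma zsum_comp (d c : Z -> R) S : (forall k, Rabs (d k) <= c k) ->
  zsum c S -> exists S', zsum d S' /\ Rabs S' <= S.
Proof.
  intros Hb (l1 & l2 & H1 & H2 & ->).
  destruct (series_comp (fun n => d (Z.of_nat n)) _ _ (fun n => Hb _) H1) as (s1 & A1 & B1).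
  destruct (series_comp (fun n => d (- Z.of_nat (S n))%Z) _ _ (fun n => Hb _) H2) as (s2 & A2 & B2).
  exists (s1 + s2). split.
  - exists s1, s2; auto.
  - eapply Rle_trans. apply Rabs_triang. lra.
Qed.
Lemma dpl_eq f x l l' : l = l' -> derivable_pt_lim f x l -> derivable_pt_lim f x l'.
Proof. intros ->; auto. Qed.

Lemma g_deriv (f df : R -> R) :
  (forall x, 0 < x -> derivable_pt_lim f x (df x)) ->
  forall u, derivable_pt_lim (fun u => f (exp u)) u (exp u * df (exp u)).
Proof.
  intros H u. apply (dpl_eq _ _ (df (exp u) * exp u)); [ring|].
  apply (derivable_pt_lim_comp exp f). apply derivable_pt_lim_exp. apply H, exp_pos.
Qed.

Lemma g1_deriv (df ddf : R -> R) :
  (forall x, 0 < x -> derivable_pt_lim (fun y => y * df y) x (ddf x)) ->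
  forall u, derivable_pt_lim (fun u => exp u * df (exp u)) u (exp u * ddf (exp u)).
Proof.
  intros H u. apply (dpl_eq _ _ (ddf (exp u) * exp u)); [ring|].
  apply (derivable_pt_lim_comp exp (fun y => y * df y)). apply derivable_pt_lim_exp. apply H, exp_pos.
Qed.

Lemma taylor (g g1 g2 : R -> R) B2 :
  (forall u, derivable_pt_lim g u (g1 u)) ->
  (forall u, derivable_pt_lim g1 u (g2 u)) ->
  (forall u, Rabs (g2 u) <= B2) ->
  forall t u, Rabs (g u - g t - g1 t * (u - t)) <= B2 * (u - t)^2.
Proof.
  intros D1 D2 Bd t u.
  assert (B2p : 0 <= B2) by (eapply Rle_trans; [apply Rabs_pos|apply (Bd 0)]).
  destruct (Rtotal_order t u) as [Hlt|[Heq|Hgt]].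
  - destruct (MVT_cor2 g g1 t u Hlt (fun c _ => D1 c)) as (c & Ec & Hc).
    destruct (MVT_cor2 g1 g2 t c (proj1 Hc) (fun c _ => D2 c)) as (d & Ed & Hd).
    replace (g u - g t - g1 t * (u - t)) with (g2 d * (c - t) * (u - t)).
    2: { rewrite <- Ed. lra. }
    rewrite !Rabs_mult. rewrite (Rabs_right (c - t)) by lra. rewrite (Rabs_right (u - t)) by lra.
    specialize (Bd d).
    assert (0 <= Rabs (g2 d)) by apply Rabs_pos.
    apply Rle_trans with (B2 * (c - t) * (u - t)).
    + apply Rmult_le_compat_r; [lra|]. apply Rmult_le_compat_r; lra.
    + assert (0 <= B2 * ((u - c) * (u - t))) by (apply Rmult_le_pos; [lra|apply Rmult_le_pos; lra]). nra.
  - subst. replace (g u - g u - g1 u * (u - u)) with 0 by ring. rewrite Rabs_R0. nra.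
  - destruct (MVT_cor2 g g1 u t Hgt (fun c _ => D1 c)) as (c & Ec & Hc).
    destruct (MVT_cor2 g1 g2 c t (proj2 Hc) (fun c _ => D2 c)) as (d & Ed & Hd).
    replace (g u - g t - g1 t * (u - t)) with (g2 d * (t - c) * (t - u)).
    2: { rewrite <- Ed. lra. }
    rewrite !Rabs_mult. rewrite (Rabs_right (t - c)) by lra. rewrite (Rabs_right (t - u)) by lra.
    specialize (Bd d).
    assert (0 <= Rabs (g2 d)) by apply Rabs_pos.
    apply Rle_trans with (B2 * (t - c) * (t - u)).
    + apply Rmult_le_compat_r; [lra|]. apply Rmult_le_compat_r; lra.
    + assert (0 <= B2 * ((c - u) * (t - u))) by (apply Rmult_le_pos; [lra|apply Rmult_le_pos; lra]). nra.
Qed.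

Lemma RInt_eq (g : R -> R) a b : a <= b -> (forall u, continuity_pt g u) ->
  Defs.RInt g a b = Coquelicot.RInt.RInt g a b.
Proof.
  intros Hab Hc. unfold Defs.RInt.
  destruct (excluded_middle_informative _) as [H|H].
  - rewrite (RInt_Reals g a b (epsilon H (fun _ => True))). reflexivity.
  - exfalso. apply H. constructor. apply continuity_implies_RiemannInt; auto.
Qed.

Lemma integ (g g1 g2 : R -> R) B2 t a b :
  (forall u, derivable_pt_lim g u (g1 u)) ->
  (forall u, derivable_pt_lim g1 u (g2 u)) ->
  (forall u, Rabs (g2 u) <= B2) -> a <= b ->
  Rabs (Defs.RInt g a b - (g t * (b - a) + g1 t * ((b - t)^2 - (a - t)^2) / 2))
   <= (b - a) * (B2 * (2 * (a - t)^2 + 2 * (b - a)^2)).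
Proof.
  intros D1 D2 Bd Hab.
  assert (Cg : forall u, continuity_pt g u).
  { intro u. apply derivable_continuous_pt. exists (g1 u). apply D1. }
  rewrite RInt_eq; auto.
  set (p := fun u => g t + g1 t * (u - t)).
  assert (Ip : is_RInt p a b (g t * (b - a) + g1 t * ((b - t)^2 - (a - t)^2) / 2)).
  { set (F := fun u => g t * u + g1 t * ((u - t)^2) / 2).
    replace (g t * (b - a) + g1 t * ((b - t)^2 - (a - t)^2) / 2) with (F b - F a).
    2: { unfold F. field. }
    apply (is_RInt_derive (V:=R_CompleteNormedModule)).
    - intros x _. unfold F, p. auto_derive; auto. field.
    - intros x _. unfold p. apply (@ex_derive_continuous R_AbsRing R_NormedModule (fun u => g t + g1 t * (u - t))).
      auto_derive; auto. }
  assert (Ig : is_RInt g a b (Coquelicot.RInt.RInt g a b)).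
  { apply (@RInt_correct R_CompleteNormedModule), (@ex_RInt_continuous R_CompleteNormedModule). intros z _.
    apply continuity_pt_filterlim. apply Cg. }
  pose proof (is_RInt_minus _ _ _ _ _ _ Ig Ip) as Im.
  refine (@norm_RInt_le_const R_NormedModule (fun y => minus (g y) (p y)) a b _ _ Hab _ Im).
  intros x Hx. unfold norm, minus, plus, opp, p; simpl. unfold abs; simpl.
  eapply Rle_trans. 
  { replace (g x + - (g t + g1 t * (x - t))) with (g x - g t - g1 t * (x - t)) by ring.
    apply (taylor g g1 g2 B2 D1 D2 Bd). }
  assert (B2p : 0 <= B2) by (eapply Rle_trans; [apply Rabs_pos|apply (Bd 0)]).
  apply Rmult_le_compat_l; auto.
  assert (0 <= ((a - t) - (x - a))^2) by apply pow2_ge_0.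
  assert ((x - a)^2 <= (b - a)^2) by (destruct Hx; apply pow_incr; lra).
  nra.
Qed.

Lemma half_int (k z : Z) : 1/2 <= Rabs (IZR k - (IZR z + 1/2)).
Proof.
  destruct (Z.le_gt_cases k z) as [H|H].
  - apply IZR_le in H. rewrite Rabs_left by lra. lra.
  - assert (H' : (z + 1 <= k)%Z) by lia. apply IZR_le in H'. rewrite plus_IZR in H'.
    rewrite Rabs_right by lra. lra.
Qed.

Lemma claim (chi f df ddf : R -> R) B2 B x w :
  (forall u, derivable_pt_lim (fun u => f (exp u)) u (exp u * df (exp u))) ->
  (forall u, derivable_pt_lim (fun u => exp u * df (exp u)) u (exp u * ddf (exp u))) ->
  (forall u, Rabs (exp u * ddf (exp u)) <= B2) ->
  (forall u, 0 < u -> zsum (fun k => chi (exp (- IZR k) * u)) 1) ->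
  (forall u, 0 < u -> zsum (alg_moment_term chi 1 u) 0) ->
  (forall u, 0 < u -> exists s, zsum (abs_moment_term chi 2 u) s /\ s <= B) ->
  0 < x -> 0 < w ->
  (forall k : Z, 1/2 <= Rabs (IZR k - w * ln x)) ->
  Rabs (I_op chi w f x - f x - (x * df x) / (2 * w)) <= 10 * B2 * B / w^2.
Proof.
  intros D1 D2 Bd K0 K1 K2 xp wp Hh.
  set (g := fun u => f (exp u)). set (g1 := fun u => exp u * df (exp u)).
  set (g2 := fun u => exp u * ddf (exp u)).
  set (t := ln x).
  assert (Ev : x * df x = g1 t) by (unfold g1, t; rewrite exp_ln; auto).
  assert (Ef : f x = g t) by (unfold g, t; rewrite exp_ln; auto).
  rewrite Ev, Ef.
  set (v := g1 t).
  set (u := Rpower x w).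
  assert (up : 0 < u) by (unfold u, Rpower; apply exp_pos).
  assert (lu : ln u = w * t) by (unfold u, Rpower, t; rewrite ln_exp; auto).
  set (a := fun k : Z => chi (exp (- IZR k) * u)).
  set (rho := fun k : Z => w * Defs.RInt g (IZR k / w) ((IZR k + 1) / w) - g t
                  - v * (IZR k - w * t + 1/2) / w).
  assert (B2p : 0 <= B2) by (eapply Rle_trans; [apply Rabs_pos|apply (Bd 0)]).
  assert (Hr : forall k, Rabs (rho k) <= B2 * (2 * (IZR k - w * t)^2 + 2) / w^2).
  { intro k.
    pose proof (integ g g1 g2 B2 t (IZR k / w) ((IZR k + 1) / w) D1 D2 Bd) as I.
    assert (le : IZR k / w <= (IZR k + 1) / w).
    { unfold Rdiv; apply Rmult_le_compat_r; [left; apply Rinv_0_lt_compat; auto|lra]. }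
    specialize (I le).
    replace (rho k) with (w * (Defs.RInt g (IZR k / w) ((IZR k + 1) / w) -
          (g t * ((IZR k + 1) / w - IZR k / w) +
           g1 t * (((IZR k + 1) / w - t) ^ 2 - (IZR k / w - t) ^ 2) / 2))).
    2: { unfold rho, v. field. lra. }
    rewrite Rabs_mult, (Rabs_right w) by lra.
    replace (B2 * (2 * (IZR k - w * t)^2 + 2) / w^2) with
      (w * (((IZR k + 1) / w - IZR k / w) *
       (B2 * (2 * (IZR k / w - t) ^ 2 + 2 * ((IZR k + 1) / w - IZR k / w) ^ 2)))).
    2: { field. lra. }
    apply Rmult_le_compat_l; lra. }
  assert (Hd : forall k, Rabs (a k * rho k) <= (10 * B2 / w^2) * abs_moment_term chi 2 u k).
  { intro k. unfold abs_moment_term. fold (a k). rewrite lu, pow2_abs, Rabs_mult.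
    specialize (Hh k). fold t in Hh.
    assert (D4 : 1 <= 4 * (IZR k - w * t)^2).
    { rewrite <- pow2_abs. nra. }
    assert (0 <= Rabs (a k)) by apply Rabs_pos.
    apply Rle_trans with (Rabs (a k) * (B2 * (2 * (IZR k - w * t)^2 + 2) / w^2)).
    - apply Rmult_le_compat_l; auto.
    - assert (w2 : 0 < w^2) by (apply pow_lt; auto).
      assert (0 <= Rabs (a k) * B2 / w^2).
      { unfold Rdiv; apply Rmult_le_pos; [apply Rmult_le_pos; auto|left; apply Rinv_0_lt_compat; auto]. }
      replace (Rabs (a k) * (B2 * (2 * (IZR k - w * t)^2 + 2) / w^2)) with
        ((Rabs (a k) * B2 / w^2) * (2 * (IZR k - w * t)^2 + 2)) by (field; lra).
      replace (10 * B2 / w ^ 2 * (Rabs (a k) * (IZR k - w * t) ^ 2)) with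
        ((Rabs (a k) * B2 / w^2) * (10 * (IZR k - w * t)^2)) by (field; lra).
      apply Rmult_le_compat_l; auto. lra. }
  destruct (K2 u up) as (s & Hs & sB).
  destruct (zsum_comp _ _ _ Hd (zsum_scal _ _ _ Hs)) as (S' & HS' & BS').
  assert (Z : zsum (fun k => chi (exp (- IZR k) * Rpower x w) *
                    (w * Defs.RInt (fun u => f (exp u)) (IZR k / w) ((IZR k + 1) / w)))
              (g t * 1 + v / w * 0 + v / (2 * w) * 1 + S')).
  { apply (zsum_ext (fun k => ((g t * a k + v / w * alg_moment_term chi 1 u k)
                               + v / (2 * w) * a k) + a k * rho k)).
    - intro k. unfold alg_moment_term. fold (a k). rewrite lu.
      unfold rho, a, u. fold g. field. lra.
    - apply zsum_plus; [apply zsum_plus; [apply zsum_plus|]|].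
      + apply zsum_scal. apply (K0 u up).
      + apply zsum_scal. apply (K1 u up).
      + apply zsum_scal. apply (K0 u up).
      + exact HS'. }
  unfold I_op. rewrite (zseries_eq _ _ Z).
  replace (g t * 1 + v / w * 0 + v / (2 * w) * 1 + S' - g t - v / (2 * w)) with S' by ring.
  apply Rle_trans with (10 * B2 / w ^ 2 * s); auto.
  unfold Rdiv. rewrite (Rmult_comm (10 * B2 * B)), (Rmult_comm (10 * B2)), Rmult_assoc.
  assert (w2 : 0 < / w^2) by (apply Rinv_0_lt_compat, pow_lt; auto).
  apply Rmult_le_compat_l; [lra|]. apply Rmult_le_compat_l; lra.
Qed.

Theorem theorem5 (chi f : R -> R) :
  kernel chi ->
  (forall u, 0 < u -> zsum (alg_moment_term chi 1 u) 0) ->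
  C2_mellin f ->
  (forall eps, 0 < eps -> exists W, 0 < W /\ forall w, W <= w ->
     forall x, 0 < x -> Rabs (I_op chi w f x - f x) <= eps / w) ->
  exists c, forall x, 0 < x -> f x = c.
Proof.
  intros (Kc & K0 & (B & K2) & Kt) K1 (df & ddf & Hdf & Hddf & _ & _ & (_ & (B2 & HB2))) Hw.
  assert (D1 := g_deriv f df Hdf). assert (D2 := g1_deriv df ddf Hddf).
  assert (Bd : forall u, Rabs (exp u * ddf (exp u)) <= B2) by (intro u; apply HB2, exp_pos).
  assert (B2p : 0 <= B2) by (eapply Rle_trans; [apply Rabs_pos|apply (Bd 0)]).
  assert (K2' : forall u, 0 < u -> exists s, zsum (abs_moment_term chi 2 u) s /\ s <= Rabs B).
  { intros u up. destruct (K2 u up) as (s & Hs & sB). exists s; split; auto.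
    eapply Rle_trans; [exact sB|apply Rle_abs]. }
  assert (Z0 : forall x, 0 < x -> x <> 1 -> x * df x = 0).
  { intros x xp x1. set (t := ln x).
    assert (tn : t <> 0).
    { intro E. apply x1. rewrite <- (exp_ln x xp). fold t. rewrite E. apply exp_0. }
    set (v := x * df x). apply Rabs_eq_0. apply Rnot_gt_le_0 ||
      (destruct (Req_dec (Rabs v) 0) as [E|E]; [exact E|exfalso]).
    assert (vp : 0 < Rabs v) by (pose proof (Rabs_pos v); lra).
    destruct (Hw (Rabs v / 4)) as (W & Wp & HW); [lra|].
    set (M := Rmax W (80 * B2 * Rabs B / Rabs v + 1)).
    assert (tp : 0 < Rabs t) by (apply Rabs_pos_lt; auto).
    destruct (archimed (M * Rabs t)) as (Hz & _).
    set (z := up (M * Rabs t)) in *.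
    set (w := (IZR z + 1/2) / Rabs t).
    assert (Mw : M < w).
    { unfold w. apply Rmult_lt_reg_r with (Rabs t); auto. field_simplify; lra. }
    assert (WM : W <= M) by apply Rmax_l.
    assert (M2 : 80 * B2 * Rabs B / Rabs v + 1 <= M) by apply Rmax_r.
    assert (wp : 0 < w) by lra.
    assert (Hh : forall k : Z, 1/2 <= Rabs (IZR k - w * ln x)).
    { intro k. fold t. unfold w. destruct (Rcase_abs t) as [tl|tg].
      - rewrite (Rabs_left t tl).
        replace (IZR k - (IZR z + 1/2) / - t * t) with (- (IZR (- k) - (IZR z + 1/2)))
          by (rewrite opp_IZR; field; auto).
        rewrite Rabs_Ropp. apply half_int.
      - rewrite (Rabs_right t tg).
        replace (IZR k - (IZR z + 1/2) / t * t) with (IZR k - (IZR z + 1/2)) by (field; auto).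
        apply half_int. }
    pose proof (claim chi f df ddf B2 (Rabs B) x w D1 D2 Bd K0 K1 K2' xp wp Hh) as C.
    specialize (HW w ltac:(lra) x xp).
    fold v in C.
    assert (T : Rabs (v / (2 * w)) <= Rabs v / 4 / w + 10 * B2 * Rabs B / w ^ 2).
    { replace (v / (2 * w)) with ((I_op chi w f x - f x) - (I_op chi w f x - f x - v / (2 * w))) by ring.
      eapply Rle_trans; [apply Rabs_triang|]. rewrite Rabs_Ropp. lra. }
    rewrite Rabs_div in T by lra. rewrite (Rabs_right (2 * w)) in T by lra.
    assert (T2 : Rabs v * w <= 40 * B2 * Rabs B).
    { apply Rmult_le_compat_r with (r := 4 * w ^ 2) in T; [|nra].
      replace (Rabs v / (2 * w) * (4 * w ^ 2)) with (2 * (Rabs v * w)) in T by (field; lra).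
      replace ((Rabs v / 4 / w + 10 * B2 * Rabs B / w ^ 2) * (4 * w ^ 2))
        with (Rabs v * w + 40 * B2 * Rabs B) in T by (field; lra).
      lra. }
    assert (T3 : 80 * B2 * Rabs B + Rabs v <= Rabs v * w).
    { assert (80 * B2 * Rabs B / Rabs v + 1 <= w) by lra.
      apply Rmult_le_compat_l with (r := Rabs v) in H; [|lra].
      replace (Rabs v * (80 * B2 * Rabs B / Rabs v + 1)) with (80 * B2 * Rabs B + Rabs v) in H
        by (field; lra). lra. }
    assert (0 <= B2 * Rabs B) by (apply Rmult_le_pos; auto; apply Rabs_pos).
    lra. }
  assert (Z1 : forall c, 0 < c -> c <> 1 -> df c = 0).
  { intros c cp c1. specialize (Z0 c cp c1).
    destruct (Rmult_integral _ _ Z0) as [E|E]; [lra|auto]. }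
  exists (f 1). intros x xp.
  destruct (Rtotal_order x 1) as [H|[H|H]].
  - destruct (MVT_cor2 f df x 1 H (fun c Hc => Hdf c ltac:(lra))) as (c & Ec & Hc).
    rewrite (Z1 c) in Ec by lra. lra.
  - subst; auto.
  - destruct (MVT_cor2 f df 1 x H (fun c Hc => Hdf c ltac:(lra))) as (c & Ec & Hc).
    rewrite (Z1 c) in Ec by lra. lra.
Qed.
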